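(* Let $\alpha>0$. Let $u_0:\mathbb{R}\to[0,1]$ be uniformly continuous with $u_0>0$ on $\mathbb{R}$, $\liminf_{x\to-\infty}u_0>0$, $\lim_{x\to+\infty}u_0=0$, of class $C^2$ and nonincreasing on $[\xi_0,+\infty)$ for some $\xi_0>0$, and such that $\varphi_0:=-\ln u_0$ satisfies $\varphi_0'=o(\varphi_0^{-\alpha})$ and $\varphi_0''=o(\varphi_0')$ as $x\to+\infty$. Let $\rho>0$ and define $$w(t,x):=\exp\Big\{1-\big[(1+\varphi_0(x))^{\alpha+1}-\rho(\alpha+1)t\big]^{\frac{1}{\alpha+1}}\Big\},\qquad x_0(t):=\sup\Big\{x\in\mathbb{R}: u_0(x)=\exp\big(1-(\rho(\alpha+1)t+1)^{\frac{1}{\alpha+1}}\big)\Big\}.$$ Then for any small $\varepsilon>0$ there exists $t^\#>0$, depending on $\varepsilon$, such that $$|w_{xx}(t,x)|<\varepsilon\frac{w(t,x)}{(1-\ln w(t,x))^\alpha}\quad\text{for all } x\ge x_0(t)\text{ and } t\ge t^\#.$$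
   Context: $w$ solves $w_t=\rho\, w/(1-\ln w)^\alpha$ with $w(0,\cdot)=u_0$; one has $w(t,x_0(t))=1$ and $0<w(t,x)\le1$ for $x\ge x_0(t)$. *)

(* Defs.v *)
From Stdlib Require Import Reals Lra.
From Coquelicot Require Import Coquelicot.
Open Scope R_scope.

Definition phi0 (u0 : R -> R) (x : R) : R := - ln (u0 x).

Definition wsol (u0 : R -> R) (alpha rho : R) (t x : R) : R :=
  exp (1 - Rpower (Rpower (1 + phi0 u0 x) (alpha + 1) - rho * (alpha + 1) * t)
                  (1 / (alpha + 1))).

Definition x0 (u0 : R -> R) (alpha rho : R) (t : R) : Rbar :=
  Lub_Rbar (fun x => u0 x = exp (1 - Rpower (rho * (alpha + 1) * t + 1) (1 / (alpha + 1)))).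

Definition little_o_pinfty (f g : R -> R) : Prop :=
  forall eps : R, 0 < eps -> exists M : R, forall x : R, M <= x -> Rabs (f x) <= eps * Rabs (g x).

(* Main.v *)
Require Import Defs.
From Stdlib Require Import Reals Lra Lia FunctionalExtensionality Classical.
From Coquelicot Require Import Coquelicot.
Open Scope R_scope.


Lemma LS_correct u : is_LimSup_seq u (LimSup_seq u).
Proof. unfold LimSup_seq; destruct (ex_LimSup_seq u); auto. Qed.
Lemma LI_correct u : is_LimInf_seq u (LimInf_seq u).
Proof. unfold LimInf_seq; destruct (ex_LimInf_seq u); auto. Qed.

Lemma ev_lim (e : nat -> R) (le : R) : is_lim_seq e le ->
  forall eps, 0 < eps -> exists N, forall n, (N <= n)%nat -> Rabs (e n - le) < eps.
Proof.
  intros H eps Heps. apply is_lim_seq_spec in H.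
  destruct (H (mkposreal eps Heps)) as [N HN]. exists N. exact HN.
Qed.

Lemma LS_plus (w e : nat -> R) (le : R) : is_lim_seq e le ->
  LimSup_seq (fun n => w n + e n) = Rbar_plus (LimSup_seq w) le.
Proof.
  intros He. apply is_LimSup_seq_unique.
  pose proof (LS_correct w) as Hw.
  destruct (LimSup_seq w) as [l| |]; simpl in *.
  - intros eps. destruct (Hw (pos_div_2 eps)) as [H1 [N2 H2]].
    destruct (ev_lim e le He (eps/2)) as [N3 H3]. { destruct eps; simpl; lra. }
    split.
    + intros N. destruct (H1 (max N N3)) as [n [Hn Hn']]. exists n. split. lia.
      specialize (H3 n ltac:(lia)). apply Rabs_def2 in H3. simpl in Hn'. lra.
    + exists (max N2 N3). intros n Hn. specialize (H2 n ltac:(lia)).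
      specialize (H3 n ltac:(lia)). apply Rabs_def2 in H3. simpl in H2. lra.
  - intros M N. destruct (ev_lim e le He 1 Rlt_0_1) as [N3 H3].
    destruct (Hw (M + 1 - le) (max N N3)) as [n [Hn Hn']]. exists n. split. lia.
    specialize (H3 n ltac:(lia)). apply Rabs_def2 in H3. lra.
  - intros M. destruct (ev_lim e le He 1 Rlt_0_1) as [N3 H3].
    destruct (Hw (M - 1 - le)) as [N2 H2]. exists (max N2 N3). intros n Hn.
    specialize (H2 n ltac:(lia)). specialize (H3 n ltac:(lia)). apply Rabs_def2 in H3. lra.
Qed.

Lemma LI_plus (w e : nat -> R) (le : R) : is_lim_seq e le ->
  LimInf_seq (fun n => w n + e n) = Rbar_plus (LimInf_seq w) le.
Proof.
  intros He.
  assert (E1 : (fun n => w n + e n) = (fun n => - ((fun n => - w n) n + (fun n => - e n) n))).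
  { apply functional_extensionality; intros; lra. }
  rewrite E1, LimInf_seq_opp, (LS_plus _ _ (-le)).
  2: { apply is_lim_seq_opp in He. simpl in He. exact He. }
  rewrite LimSup_seq_opp. destruct (LimInf_seq w); simpl; auto. f_equal; ring.
Qed.


Lemma Lim_seq_fin_inv q : real (Lim_seq q) <> 0 ->
  exists s i, LimSup_seq q = Finite s /\ LimInf_seq q = Finite i.
Proof.
  unfold Lim_seq. destruct (LimSup_seq q), (LimInf_seq q); simpl; intros H;
  try (exfalso; apply H; reflexivity); eauto.
  all: exfalso; apply H; simpl; field.
Qed.

Lemma Lim_seq_fin q s i : LimSup_seq q = Finite s -> LimInf_seq q = Finite i ->
  real (Lim_seq q) = (s + i) / 2.
Proof. unfold Lim_seq; intros -> ->; simpl; reflexivity. Qed.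

Lemma real_mult_pos c L : 0 < c -> real (Rbar_mult c L) = c * real L.
Proof.
  intros Hc; destruct L; simpl; try ring;
  unfold Rbar_mult, Rbar_mult'; destruct Rle_dec; try lra;
  destruct Rle_lt_or_eq_dec; simpl; try ring; lra.
Qed.

Lemma LS_le0 q : (forall n, q n <= 0) -> Rbar_le (LimSup_seq q) 0.
Proof.
  intros H. eapply Rbar_le_trans. apply (LimSup_le q (fun _ => 0)).
  exists O; intros; auto. rewrite LimSup_seq_const. simpl; lra.
Qed.

Lemma Lim_minf w : Rbar_le (LimSup_seq w) 0 -> LimInf_seq w = m_infty -> Lim_seq w = m_infty.
Proof.
  unfold Lim_seq; intros H ->; destruct (LimSup_seq w); simpl in *; auto; contradiction.
Qed.

Lemma bounded_null (a q : nat -> R) (ca M : R) : is_lim_seq a ca ->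
  (exists N, forall n, (N <= n)%nat -> Rabs (q n) <= M) ->
  is_lim_seq (fun n => (a n - ca) * q n) 0.
Proof.
  intros Ha [N HN]. apply is_lim_seq_spec. intros eps.
  assert (HM : 0 < Rabs M + 1) by (pose proof (Rabs_pos M); lra).
  destruct (ev_lim a ca Ha (eps / (Rabs M + 1))) as [N2 H2].
  { apply Rdiv_lt_0_compat; [apply cond_pos|lra]. }
  exists (max N N2). intros n Hn. specialize (HN n ltac:(lia)). specialize (H2 n ltac:(lia)).
  rewrite Rminus_0_r, Rabs_mult.
  apply Rle_lt_trans with (Rabs (a n - ca) * (Rabs M + 1)).
  { apply Rmult_le_compat_l; [apply Rabs_pos|]. pose proof (Rle_abs M); lra. }
  replace (pos eps) with ((eps / (Rabs M + 1)) * (Rabs M + 1)) by (field; lra).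
  apply Rmult_lt_compat_r; lra.
Qed.

Lemma seqA_pos (q a : nat -> R) (c : R) : (forall n, q n <= 0) -> is_lim_seq a c -> 0 < c ->
  real (Lim_seq (fun n => a n * q n)) = c * real (Lim_seq q).
Proof.
  intros Hq Ha Hc.
  pose proof (LI_correct q) as HLI.
  pose proof (LS_le0 q Hq) as HLS.
  pose proof (LimSup_LimInf_seq_le q) as Hle.
  destruct (LimInf_seq q) as [i| |] eqn:Ei.
  -
    assert (Hb : exists N, forall n, (N <= n)%nat -> Rabs (q n) <= Rabs i + 1).
    { destruct (HLI (mkposreal 1 Rlt_0_1)) as [_ [N HN]]. exists N. intros n Hn.
      specialize (HN n Hn). simpl in HN. specialize (Hq n).
      rewrite Rabs_left1 by lra. pose proof (Rle_abs (-i)). rewrite Rabs_Ropp in H. lra. }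
    pose proof (bounded_null a q c _ Ha Hb) as He.
    assert (E : (fun n => a n * q n) = (fun n => (fun n => c * q n) n + (fun n => (a n - c) * q n) n)).
    { apply functional_extensionality; intros; ring. }
    assert (Lim_seq (fun n => a n * q n) = Lim_seq (fun n => c * q n)).
    { unfold Lim_seq at 1. rewrite E, (LS_plus _ _ _ He), (LI_plus _ _ _ He).
      rewrite !Rbar_plus_0_r. reflexivity. }
    rewrite H, Lim_seq_scal_l. apply real_mult_pos; auto.
  - exfalso. destruct (LimSup_seq q); simpl in *; auto.
  - assert (Lq : Lim_seq q = m_infty) by (apply Lim_minf; auto).
    destruct (ev_lim a c Ha (c/2)) as [N HN]. lra.
    assert (Hev : forall n, (N <= n)%nat -> c/2 < a n).
    { intros n Hn. specialize (HN n Hn). apply Rabs_def2 in HN. lra. }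
    assert (L2 : Lim_seq (fun n => a n * q n) = m_infty).
    { apply Lim_minf.
      - eapply Rbar_le_trans. apply (LimSup_le _ (fun _ => 0)).
        exists N; intros n Hn. specialize (Hev n Hn). specialize (Hq n). nra.
        rewrite LimSup_seq_const. simpl; lra.
      - pose proof (LimInf_le (fun n => a n * q n) (fun n => (c/2) * q n)) as H1.
        assert (H2 : LimInf_seq (fun n => (c/2) * q n) = m_infty).
        { apply is_LimInf_seq_unique. rewrite <- Ei in HLI.
          pose proof (is_LimInf_seq_scal_pos (c/2) q _ ltac:(lra) HLI) as H3.
          rewrite Ei in H3. unfold Rbar_mult, Rbar_mult' in H3.
          destruct Rle_dec; try lra. destruct Rle_lt_or_eq_dec; try lra. exact H3. }
        rewrite H2 in H1. destruct (LimInf_seq (fun n => a n * q n)); simpl in H1; auto;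
        exfalso; apply H1; exists N; intros n Hn; specialize (Hev n Hn); specialize (Hq n); nra. }
    rewrite Lq, L2. simpl. ring.
Qed.

Lemma seqA (q a : nat -> R) (c : R) : (forall n, q n <= 0) -> is_lim_seq a c -> c <> 0 ->
  real (Lim_seq (fun n => a n * q n)) = c * real (Lim_seq q).
Proof.
  intros Hq Ha Hc. destruct (Rlt_or_le 0 c) as [Hp|Hn].
  - apply seqA_pos; auto.
  - assert (E : (fun n => a n * q n) = (fun n => - ((fun n => - a n) n * q n))).
    { apply functional_extensionality; intros; ring. }
    rewrite E, Lim_seq_opp.
    assert (Ha' : is_lim_seq (fun n => - a n) (- c)).
    { apply is_lim_seq_opp in Ha. exact Ha. }
    pose proof (seqA_pos q _ (-c) Hq Ha' ltac:(lra)) as H.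
    destruct (Lim_seq (fun n => - a n * q n)); simpl in *; lra.
Qed.

Lemma seqB (q a b : nat -> R) (ca cb : R) : is_lim_seq a ca -> is_lim_seq b cb ->
  (real (Lim_seq q) <> 0 \/ forall n, a n = 0) ->
  real (Lim_seq (fun n => b n + a n * q n)) = cb + ca * real (Lim_seq q).
Proof.
  intros Ha Hb [Hq|H0].
  - destruct (Lim_seq_fin_inv q Hq) as [s [i [Es Ei]]].
    rewrite (Lim_seq_fin q s i Es Ei).
    pose proof (LS_correct q) as HLS. pose proof (LI_correct q) as HLI.
    rewrite Es in HLS. rewrite Ei in HLI.
    assert (Hbd : exists N, forall n, (N <= n)%nat -> Rabs (q n) <= Rabs s + Rabs i + 1).
    { destruct (HLI (mkposreal 1 Rlt_0_1)) as [_ [N1 H1]].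
      destruct (HLS (mkposreal 1 Rlt_0_1)) as [_ [N2 H2]].
      exists (max N1 N2). intros n Hn. specialize (H1 n ltac:(lia)). specialize (H2 n ltac:(lia)).
      simpl in *. pose proof (Rle_abs s). pose proof (Rle_abs (-i)). rewrite Rabs_Ropp in H0.
      pose proof (Rabs_pos s); pose proof (Rabs_pos i).
      apply Rabs_le; lra. }
    pose proof (bounded_null a q ca _ Ha Hbd) as He.
    assert (He2 : is_lim_seq (fun n => b n + (a n - ca) * q n) (cb + 0)).
    { apply is_lim_seq_plus'; auto. }
    rewrite Rplus_0_r in He2.
    assert (E : (fun n => b n + a n * q n) = (fun n => (fun n => ca * q n) n + (fun n => b n + (a n - ca) * q n) n)).
    { apply functional_extensionality; intros; ring. }
    assert (Hsc : LimSup_seq (fun n => ca * q n) = Finite (if Rle_dec 0 ca then ca * s else ca * i) /\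
                  LimInf_seq (fun n => ca * q n) = Finite (if Rle_dec 0 ca then ca * i else ca * s)).
    { destruct (Rle_dec 0 ca) as [Hc|Hc].
      - destruct (Rle_lt_or_eq_dec 0 ca Hc) as [Hc'|Hc'].
        + split; apply is_LimSup_seq_unique || apply is_LimInf_seq_unique.
          * apply (is_LimSup_seq_scal_pos ca q s Hc' HLS).
          * apply (is_LimInf_seq_scal_pos ca q i Hc' HLI).
        + subst ca. assert (E0 : (fun n => 0 * q n) = (fun _ => 0)).
          { apply functional_extensionality; intros; ring. }
          rewrite E0, LimSup_seq_const, LimInf_seq_const. split; f_equal; ring.
      - assert (E0 : (fun n => ca * q n) = (fun n => - ((-ca) * q n))).
        { apply functional_extensionality; intros; ring. }
        rewrite E0, LimSup_seq_opp, LimInf_seq_opp.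
        rewrite (is_LimSup_seq_unique _ _ (is_LimSup_seq_scal_pos (-ca) q s ltac:(lra) HLS)).
        rewrite (is_LimInf_seq_unique _ _ (is_LimInf_seq_scal_pos (-ca) q i ltac:(lra) HLI)).
        simpl. split; f_equal; ring. }
    destruct Hsc as [Hs1 Hs2].
    unfold Lim_seq. rewrite E, (LS_plus _ _ _ He2), (LI_plus _ _ _ He2), Hs1, Hs2.
    simpl. destruct (Rle_dec 0 ca); field.
  - assert (E : (fun n => b n + a n * q n) = b).
    { apply functional_extensionality; intros n; rewrite H0; ring. }
    assert (Ec : ca = 0).
    { assert (E2 : a = (fun _ => 0)) by (apply functional_extensionality; auto).
      rewrite E2 in Ha. apply is_lim_seq_unique in Ha. rewrite Lim_seq_const in Ha.
      injection Ha; auto. }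
    rewrite E, (is_lim_seq_unique _ _ Hb), Ec. simpl; ring.
Qed.


Definition hs (n : nat) : R := / (INR n + 1).
Lemma hs_pos n : 0 < hs n.
Proof. unfold hs. apply Rinv_0_lt_compat. pose proof (pos_INR n). lra. Qed.

Definition cont_at (u : R -> R) (x : R) : Prop :=
  forall e, 0 < e -> exists d, 0 < d /\ forall y, Rabs (y - x) < d -> Rabs (u y - u x) < e.

Lemma hs_small d : 0 < d -> exists N, forall n, (N <= n)%nat -> hs n < d.
Proof.
  intros Hd. pose proof (is_lim_seq_Rbar_loc_seq (Finite 0)) as H.
  apply is_lim_seq_spec in H. destruct (H (mkposreal d Hd)) as [N HN].
  exists N. intros n Hn. specialize (HN n Hn). simpl in HN.
  unfold hs. rewrite Rplus_0_l, Rminus_0_r in HN. apply Rabs_def2 in HN. lra.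
Qed.

Lemma seq_cont u x : cont_at u x -> is_lim_seq (fun n => u (x + hs n)) (u x).
Proof.
  intros Hc. apply is_lim_seq_spec. intros eps.
  destruct (Hc eps (cond_pos eps)) as [d [Hd Hd']].
  destruct (hs_small d Hd) as [N HN]. exists N. intros n Hn.
  apply Hd'. pose proof (hs_pos n). specialize (HN n Hn).
  replace (x + hs n - x) with (hs n) by ring. rewrite Rabs_right; lra.
Qed.

Lemma deriv_cont (F : R -> R) v g : is_derive F v g -> cont_at F v.
Proof.
  intros H. apply is_derive_Reals in H.
  assert (Hc : continuity_pt F v).
  { apply derivable_continuous_pt. exists g. exact H. }
  intros e He. destruct (Hc e He) as [d [Hd Hd']]. exists d. split; auto.
  intros y Hy. destruct (Req_dec y v) as [->|Hne].
  - rewrite Rminus_diag, Rabs_R0; auto.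
  - apply (Hd' y). split. split; [exact I|auto]. exact Hy.
Qed.

Lemma diffquot_lim (E : R -> R) x Ep : is_derive E x Ep ->
  is_lim_seq (fun n => (E (x + hs n) - E x) / hs n) Ep.
Proof.
  intros H. apply is_derive_Reals in H. apply is_lim_seq_spec. intros eps.
  destruct (H eps (cond_pos eps)) as [d Hd].
  destruct (hs_small d (cond_pos d)) as [N HN]. exists N. intros n Hn.
  pose proof (hs_pos n). apply Hd. lra. specialize (HN n Hn). rewrite Rabs_right; lra.
Qed.

Definition cq (G : R -> R) v0 g v : R :=
  if Req_EM_T v v0 then g else (G v - G v0) / (v - v0).

Lemma cq_eq G v0 g v : G v - G v0 = cq G v0 g v * (v - v0).
Proof.
  unfold cq. destruct Req_EM_T as [->|Hne]. ring. field. lra.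
Qed.

Lemma cq_lim (G : R -> R) v0 g (s : nat -> R) : is_derive G v0 g -> is_lim_seq s v0 ->
  is_lim_seq (fun n => cq G v0 g (s n)) g.
Proof.
  intros H Hs. apply is_derive_Reals in H. apply is_lim_seq_spec. intros eps.
  destruct (H eps (cond_pos eps)) as [d Hd].
  apply is_lim_seq_spec in Hs. destruct (Hs d) as [N HN]. exists N. intros n Hn.
  unfold cq. destruct Req_EM_T as [E|E].
  - rewrite Rminus_diag, Rabs_R0. apply cond_pos.
  - specialize (Hd (s n - v0) ltac:(lra) (HN n Hn)).
    replace (v0 + (s n - v0)) with (s n) in Hd by ring. exact Hd.
Qed.

Lemma Derive_seq f x : Derive f x = real (Lim_seq (fun n => (f (x + hs n) - f x) / hs n)).
Proof.
  unfold Derive, Lim. f_equal. apply Lim_seq_ext. intros n. simpl. unfold hs.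
  rewrite Rplus_0_l. reflexivity.
Qed.

Lemma chain_junk (u G : R -> R) x g : cont_at u x ->
  (forall h, 0 < h -> u (x + h) <= u x) -> is_derive G (u x) g -> g <> 0 ->
  Derive (fun y => G (u y)) x = g * Derive u x.
Proof.
  intros Hc Hm HG Hg. rewrite !Derive_seq.
  rewrite <- (seqA (fun n => (u (x + hs n) - u x) / hs n) (fun n => cq G (u x) g (u (x + hs n))) g).
  - f_equal. apply Lim_seq_ext. intros n. rewrite (cq_eq G (u x) g). pose proof (hs_pos n). field. lra.
  - intros n. pose proof (hs_pos n). specialize (Hm _ H).
    unfold Rdiv. apply Rmult_le_0_r. lra. left. apply Rinv_0_lt_compat; auto.
  - apply cq_lim; auto. apply seq_cont; auto.
  - auto.
Qed.

Lemma prod_junk (u F E : R -> R) x Fp Ep : cont_at u x ->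
  is_derive F (u x) Fp -> is_derive E x Ep -> E x = Derive u x ->
  Derive (fun y => F (u y) * E y) x = Fp * E x * Derive u x + F (u x) * Ep.
Proof.
  intros Hc HF HE HEx. rewrite !Derive_seq.
  rewrite <- Derive_seq.
  transitivity (real (Lim_seq (fun n =>
     (fun n => F (u (x + hs n)) * ((E (x + hs n) - E x) / hs n)) n +
     (fun n => E x * cq F (u x) Fp (u (x + hs n))) n * (fun n => (u (x + hs n) - u x) / hs n) n))).
  { f_equal. apply Lim_seq_ext. intros n. simpl.
    pose proof (cq_eq F (u x) Fp (u (x + hs n))). pose proof (hs_pos n).
    replace (F (u (x + hs n)) * E (x + hs n) - F (u x) * E x) with
      (F (u (x + hs n)) * (E (x + hs n) - E x) + E x * (F (u (x + hs n)) - F (u x))) by ring.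
    rewrite H. field. lra. }
  rewrite (seqB _ _ _ (E x * Fp) (F (u x) * Ep)).
  - rewrite <- Derive_seq. ring.
  - apply is_lim_seq_scal_l with (a := E x) (lu := Finite Fp). apply cq_lim; auto. apply seq_cont; auto.
  - apply is_lim_seq_mult' . 
    + apply (seq_cont (fun y => F (u y))). intros e He.
      destruct (deriv_cont F _ _ HF e He) as [d1 [Hd1 H1]].
      destruct (Hc d1 Hd1) as [d2 [Hd2 H2]]. exists d2; split; auto.
    + apply diffquot_lim; auto.
  - rewrite <- Derive_seq. destruct (Req_dec (Derive u x) 0) as [H0|H0].
    + right. intros n. rewrite HEx, H0. ring.
    + left; auto.
Qed.


Section F.
Variables al K : R.
Definition pw A := Rpower A al.
Definition Bf A := Rpower A (al + 1) - K.
Definition Sf A := Rpower (Bf A) (1 / (al + 1)).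
Definition Hf A := exp (1 - Sf A).
Definition H1 A := - (Hf A * (Sf A * (pw A / Bf A))).
Definition H2 A := Hf A * (Sf A * Sf A * pw A * pw A / (Bf A * Bf A)
   + al * Sf A * pw A * pw A / (Bf A * Bf A) - al * Sf A * pw A / (A * Bf A)).
Definition Afun v := 1 + - ln v.
Definition G1 v := Hf (Afun v).
Definition g1 v := H1 (Afun v) * (- / v).
Definition g2 v := (H2 (Afun v) + H1 (Afun v)) / (v * v).

Hypothesis Hal : 0 < al.

Lemma pw_pos A : 0 < pw A.
Proof. unfold pw, Rpower. apply exp_pos. Qed.

Lemma Rpower_m1 A : 0 < A -> Rpower A (al - 1) = pw A / A.
Proof.
  intros HA. unfold Rminus. rewrite Rpower_plus, Rpower_Ropp, Rpower_1 by auto. reflexivity.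
Qed.

Lemma D_pw A : 0 < A -> is_derive pw A (al * pw A / A).
Proof.
  intros HA. apply is_derive_Reals. unfold pw.
  replace (al * Rpower A al / A) with (al * Rpower A (al - 1)).
  apply derivable_pt_lim_power; auto. rewrite Rpower_m1 by auto. unfold pw. field. lra.
Qed.

Lemma D_B A : 0 < A -> is_derive Bf A ((al + 1) * pw A).
Proof.
  intros HA. unfold Bf. auto_derive.
  - eexists. apply is_derive_Reals, derivable_pt_lim_power; auto.
  - rewrite (is_derive_unique _ _ _ (proj2 (is_derive_Reals _ _ _) (derivable_pt_lim_power A (al+1) HA))).
    unfold pw. replace (al + 1 - 1) with al by ring. ring.
Qed.

Lemma Rpower_pos x y : 0 < Rpower x y.
Proof. unfold Rpower; apply exp_pos. Qed.

Lemma D_S A : 0 < A -> 0 < Bf A -> is_derive Sf A (Sf A * pw A / Bf A).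
Proof.
  intros HA HB. unfold Sf.
  eapply is_derive_ext. { intros t. reflexivity. }
  pose proof (is_derive_comp (fun b => Rpower b (1 / (al + 1))) Bf A _ _
    (proj2 (is_derive_Reals _ _ _) (derivable_pt_lim_power (Bf A) (1/(al+1)) HB)) (D_B A HA)) as H.
  replace (Rpower (Bf A) (1 / (al + 1)) * pw A / Bf A) with
    (scal ((al + 1) * pw A) (1 / (al + 1) * Rpower (Bf A) (1 / (al + 1) - 1))). exact H.
  unfold scal; simpl; unfold mult; simpl. unfold Rminus. rewrite Rpower_plus, Rpower_Ropp, Rpower_1 by auto.
  field. split; lra.
Qed.

Lemma DS A : 0 < A -> 0 < Bf A -> Derive (fun x : R => Sf x) A = Sf A * pw A / Bf A.
Proof. intros; apply is_derive_unique, D_S; auto. Qed.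
Lemma DB A : 0 < A -> Derive (fun x : R => Bf x) A = (al + 1) * pw A.
Proof. intros; apply is_derive_unique, D_B; auto. Qed.
Lemma Dpw A : 0 < A -> Derive (fun x : R => pw x) A = al * pw A / A.
Proof. intros; apply is_derive_unique, D_pw; auto. Qed.

Lemma D_H A : 0 < A -> 0 < Bf A -> is_derive Hf A (H1 A).
Proof.
  intros HA HB. unfold Hf, H1. auto_derive.
  - eexists. apply D_S; auto.
  - rewrite (DS A HA HB). unfold Hf. change (1 + - Sf A) with (1 - Sf A). assert (Bf A <> 0) by lra. revert H. generalize (exp (1 - Sf A)) (Sf A) (pw A) (Bf A). intros. field. auto.
Qed.

Lemma DH A : 0 < A -> 0 < Bf A -> Derive (fun x : R => Hf x) A = H1 A.
Proof. intros; apply is_derive_unique, D_H; auto. Qed.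

Lemma D_H1 A : 0 < A -> 0 < Bf A -> is_derive H1 A (H2 A).
Proof.
  intros HA HB. unfold H1. auto_derive.
  - split. eexists; apply D_H; auto. split. eexists; apply D_S; auto.
    split. eexists; apply D_pw; auto. split. eexists; apply D_B; auto. split; auto. lra.
  - rewrite DH, DS, Dpw, DB; auto.
    unfold H1, H2. assert (Bf A <> 0) by lra. assert (A <> 0) by lra. revert H H0.
    generalize (Hf A) (Sf A) (pw A) (Bf A). intros. field. auto.
Qed.

Lemma D_G1 v : 0 < v -> 0 < Afun v -> 0 < Bf (Afun v) -> is_derive G1 v (g1 v).
Proof.
  intros Hv HA HB. unfold G1, g1, Afun in *. auto_derive.
  - split. eexists; apply D_H; auto. split; auto.
  - rewrite (DH (1 + - ln v)); auto. assert (v <> 0) by lra. revert H.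
    generalize (H1 (1 + - ln v)). intros. field. auto.
Qed.

Lemma D_g1 v : 0 < v -> 0 < Afun v -> 0 < Bf (Afun v) -> is_derive g1 v (g2 v).
Proof.
  intros Hv HA HB. unfold g1, g2, Afun in *. auto_derive.
  - split. eexists; apply D_H1; auto. split; auto. split; auto. lra.
  - replace (Derive (fun x : R => H1 x) (1 + - ln v)) with (H2 (1 + - ln v))
      by (symmetry; apply is_derive_unique, D_H1; auto).
    assert (v <> 0) by lra. revert H.
    generalize (H1 (1 + - ln v)) (H2 (1 + - ln v)). intros. field. auto.
Qed.
End F.


Lemma mul_le1 c X Y : 0 <= c <= 1 -> 0 <= X <= Y -> c * X <= Y.
Proof. intros. nra. Qed.

Lemma alg_bound al eps H S a B sg A P P2 m0 :
  0 < al -> 0 < H -> 1 <= sg -> sg * S = B -> 1 <= B -> 1 <= A -> 1 <= a -> 0 < S ->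
  a * Rabs P <= m0 -> Rabs P2 <= Rabs P -> m0 <= 1 -> (2 + 2 * al) * m0 < eps ->
  Rabs (H * (S * S * a * a / (B * B) + al * S * a * a / (B * B) - al * S * a / (A * B)) * (P * P)
        + - (H * (S * (a / B))) * P2) < eps * H / sg.
Proof.
  intros Hal HH Hsg HSB HB HA Ha HS HP HP2 Hm1 Heps.
  set (brk := (S * a * a / B + al * a * a / B - al * a / A) * (P * P) - a * P2).
  assert (E : H * (S * S * a * a / (B * B) + al * S * a * a / (B * B) - al * S * a / (A * B)) * (P * P)
        + - (H * (S * (a / B))) * P2 = H / sg * brk).
  { unfold brk. assert (S = B / sg) by (field_simplify_eq; lra). subst S. field. lra. }
  rewrite E. clear E.
  assert (PP : P * P = Rabs P * Rabs P) by (rewrite <- Rabs_mult, Rabs_right; nra).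
  assert (Hp : 0 <= Rabs P) by apply Rabs_pos.
  remember (Rabs P) as p.
  assert (Hm0 : 0 <= m0) by (assert (0 <= a * p) by (apply Rmult_le_pos; lra); lra).
  assert (Hap : a * p <= m0) by exact HP.
  assert (Hap0 : 0 <= a * p) by (apply Rmult_le_pos; lra).
  assert (Hsq : (a*p)*(a*p) <= m0 * m0) by (apply Rmult_le_compat; lra).
  assert (Hsq0 : 0 <= (a*p)*(a*p)) by (apply Rmult_le_pos; lra).
  assert (T1 : Rabs (S * a * a / B * (P * P)) <= m0 * m0).
  { rewrite PP. assert (S / B <= 1).
    { replace (S / B) with (/ sg) by (rewrite <- HSB; field; lra).
      rewrite <- Rinv_1. apply Rinv_le_contravar; lra. }
    rewrite Rabs_right.
    2: { apply Rle_ge. replace (S * a * a / B * (p * p)) with ((S/B) * (a * p) * (a * p)) by (field; lra).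
         apply Rmult_le_pos; [apply Rmult_le_pos|]; try nra. apply Rlt_le, Rdiv_lt_0_compat; lra. }
    replace (S * a * a / B * (p * p)) with ((S/B) * ((a * p) * (a * p))) by (field; lra).
    assert (0 <= S / B) by (apply Rlt_le, Rdiv_lt_0_compat; lra).
    apply Rle_trans with ((a*p)*(a*p)); [|lra]. rewrite <- (Rmult_1_l ((a*p)*(a*p))) at 2.
    apply Rmult_le_compat_r; nra. }
  assert (T2 : Rabs (al * a * a / B * (P * P)) <= al * (m0 * m0)).
  { rewrite PP. assert (/ B <= 1) by (rewrite <- Rinv_1; apply Rinv_le_contravar; lra).
    assert (0 < / B) by (apply Rinv_0_lt_compat; lra).
    replace (al * a * a / B * (p * p)) with (al * / B * ((a * p) * (a * p))) by (field; lra).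
    rewrite Rabs_right by (apply Rle_ge; repeat apply Rmult_le_pos; nra).
    rewrite Rmult_assoc. apply Rmult_le_compat_l; [lra|]. apply mul_le1; lra. }
  assert (T3 : Rabs (al * a / A * (P * P)) <= al * (m0 * m0)).
  { rewrite PP. assert (/ A <= 1) by (rewrite <- Rinv_1; apply Rinv_le_contravar; lra).
    assert (0 < / A) by (apply Rinv_0_lt_compat; lra).
    replace (al * a / A * (p * p)) with (al * / A * / a * ((a * p) * (a * p))) by (field; lra).
    assert (0 < / a) by (apply Rinv_0_lt_compat; lra).
    assert (/ a <= 1) by (rewrite <- Rinv_1; apply Rinv_le_contravar; lra).
    rewrite Rabs_right by (apply Rle_ge; repeat apply Rmult_le_pos; nra).
    rewrite !Rmult_assoc. apply Rmult_le_compat_l; [lra|]. apply mul_le1; [lra|].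
    split. apply Rmult_le_pos; lra. apply mul_le1; lra. }
  assert (T4 : Rabs (a * P2) <= m0).
  { rewrite Rabs_mult, Rabs_right by lra. apply Rle_trans with (a * p); [|lra].
    apply Rmult_le_compat_l; lra. }
  assert (Hb : Rabs brk <= (1 + 2 * al) * (m0 * m0) + m0).
  { unfold brk.
    replace ((S * a * a / B + al * a * a / B - al * a / A) * (P * P) - a * P2) with
      (S * a * a / B * (P * P) + al * a * a / B * (P * P) + (- (al * a / A * (P * P))) + - (a * P2)) by ring.
    eapply Rle_trans. apply Rabs_triang. eapply Rle_trans. apply Rplus_le_compat_r. apply Rabs_triang.
    eapply Rle_trans. apply Rplus_le_compat_r. apply Rplus_le_compat_r. apply Rabs_triang.
    rewrite !Rabs_Ropp. lra. }
  assert (Hmm : m0 * m0 <= m0) by nra.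
  assert (Hmm2 : (1 + 2 * al) * (m0 * m0) <= (1 + 2 * al) * m0) by (apply Rmult_le_compat_l; lra).
  assert (Hb2 : Rabs brk < eps) by lra.
  rewrite Rabs_mult. rewrite (Rabs_right (H / sg)) by (apply Rle_ge, Rlt_le, Rdiv_lt_0_compat; lra).
  replace (eps * H / sg) with (H / sg * eps) by (field; lra).
  apply Rmult_lt_compat_l; auto. apply Rdiv_lt_0_compat; lra.
Qed.


Lemma cont_comp (F u : R -> R) x : cont_at F (u x) -> cont_at u x -> cont_at (fun y => F (u y)) x.
Proof.
  intros HF Hu e He. destruct (HF e He) as [d1 [Hd1 H1]].
  destruct (Hu d1 Hd1) as [d2 [Hd2 H2]]. exists d2; split; auto.
Qed.

Lemma cont_pt (f : R -> R) y : cont_at f y -> continuity_pt f y.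
Proof.
  intros H. unfold continuity_pt, continue_in, limit1_in, limit_in.
  intros e He. destruct (H e He) as [d [Hd H']]. exists d; split; auto.
  intros z [_ Hz]. simpl in *. unfold R_dist in *. auto.
Qed.

Lemma g1_neq al K v : 0 < v -> 0 < Bf al K (Afun v) -> g1 al K v <> 0.
Proof.
  intros Hv HB. unfold g1, H1.
  assert (0 < Hf al K (Afun v)) by (unfold Hf; apply exp_pos).
  assert (0 < Sf al K (Afun v)) by (unfold Sf; apply Rpower_pos).
  assert (0 < pw al (Afun v)) by apply pw_pos.
  assert (0 < / v) by (apply Rinv_0_lt_compat; auto).
  assert (0 < pw al (Afun v) / Bf al K (Afun v)) by (apply Rdiv_lt_0_compat; auto).
  generalize dependent (Hf al K (Afun v)). generalize dependent (Sf al K (Afun v)).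
  generalize dependent (pw al (Afun v) / Bf al K (Afun v)). intros. 
  assert (0 < r1 * (r0 * r)) by (apply Rmult_lt_0_compat; auto; apply Rmult_lt_0_compat; auto).
  nra.
Qed.

Lemma D_nln v : 0 < v -> is_derive (fun w => - ln w) v (- / v).
Proof. intros Hv. auto_derive. lra. field. lra. Qed.

Lemma D_ninv v : 0 < v -> is_derive (fun w => - / w) v (/ (v * v)).
Proof. intros Hv. auto_derive. lra. field. lra. Qed.

Lemma Rpower_one y : Rpower 1 y = 1.
Proof. unfold Rpower. rewrite ln_1, Rmult_0_r, exp_0. reflexivity. Qed.

Theorem lemma3p1 (alpha : R) (u0 : R -> R) (rho : R) :
  0 < alpha ->
  (* u0 : R -> [0,1], u0 > 0 *)
  (forall x, 0 < u0 x /\ u0 x <= 1) ->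
  (* uniformly continuous *)
  (forall e, 0 < e -> exists d, 0 < d /\
     forall x y, Rabs (x - y) < d -> Rabs (u0 x - u0 y) < e) ->
  (* liminf_{x -> -oo} u0 > 0 *)
  (exists c, 0 < c /\ exists M, forall x, x <= M -> c <= u0 x) ->
  (* lim_{x -> +oo} u0 = 0 *)
  is_lim u0 p_infty 0 ->
  (* C^2 and nonincreasing on [xi0, +oo) for some xi0 > 0 *)
  (exists xi0, 0 < xi0 /\
     (forall x, xi0 < x -> ex_derive_n u0 2 x /\ continuous (Derive_n u0 2) x) /\
     (forall x y, xi0 <= x -> x <= y -> u0 y <= u0 x)) ->
  (* phi0' = o(phi0^(-alpha)) and phi0'' = o(phi0') as x -> +oo *)
  little_o_pinfty (Derive (phi0 u0)) (fun x => Rpower (phi0 u0 x) (- alpha)) ->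
  little_o_pinfty (Derive_n (phi0 u0) 2) (Derive (phi0 u0)) ->
  0 < rho ->
  forall eps, 0 < eps ->
  exists tsharp, 0 < tsharp /\
    forall t x : R, tsharp <= t -> Rbar_le (x0 u0 alpha rho t) (Finite x) ->
      Rabs (Derive_n (wsol u0 alpha rho t) 2 x)
        < eps * wsol u0 alpha rho t x / Rpower (1 - ln (wsol u0 alpha rho t x)) alpha.
Proof.
Proof.
  intros Hal Hu Huc _ Hlim [xi0 [Hxi [Hreg Hmono]]] Ho1 Ho2 Hrho eps Heps.
  assert (Hcont : forall y, cont_at u0 y).
  { intros y e He. destruct (Huc e He) as [d [Hd H]]. exists d; split; auto. }
  assert (H2a : 0 < Rpower 2 alpha) by apply Rpower_pos.
  set (m1 := Rmin 1 eps / (Rpower 2 alpha * (4 + 4 * alpha))).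
  assert (Hmin : 0 < Rmin 1 eps) by (apply Rmin_glb_lt; lra).
  assert (Hm1 : 0 < m1).
  { unfold m1. apply Rdiv_lt_0_compat; auto. apply Rmult_lt_0_compat; lra. }
  destruct (Ho1 m1 Hm1) as [M1 HM1]. destruct (Ho2 1 Rlt_0_1) as [M2 HM2].
  set (M := Rmax (xi0 + 1) (Rmax M1 M2)).
  assert (HM : xi0 + 1 <= M /\ M1 <= M /\ M2 <= M).
  { unfold M. split. apply Rmax_l. split; eapply Rle_trans; [| apply Rmax_r | | apply Rmax_r]; 
    [apply Rmax_l | apply Rmax_r]. }
  set (m0 := u0 M).
  assert (Hm0 : 0 < m0 <= 1) by apply Hu.
  set (Q := Rmax 2 (1 - ln m0)).
  assert (HQ : 2 <= Q /\ 1 - ln m0 <= Q) by (split; [apply Rmax_l | apply Rmax_r]).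
  assert (HRQ : 0 < Rpower Q (alpha + 1)) by apply Rpower_pos.
  exists (Rpower Q (alpha + 1) / (rho * (alpha + 1)) + 1). split.
  { assert (0 < Rpower Q (alpha + 1) / (rho * (alpha + 1))).
    { apply Rdiv_lt_0_compat; auto. apply Rmult_lt_0_compat; lra. } lra. }
  intros t x Ht Hx.
  set (K := rho * (alpha + 1) * t).
  assert (HK : Rpower Q (alpha+1) < K).
  { assert (E : rho * (alpha + 1) * (Rpower Q (alpha + 1) / (rho * (alpha + 1)) + 1)
              = Rpower Q (alpha + 1) + rho * (alpha + 1)) by (field; lra).
    assert (rho * (alpha + 1) * (Rpower Q (alpha + 1) / (rho * (alpha + 1)) + 1) <= K).
    { unfold K. apply Rmult_le_compat_l; auto. apply Rlt_le, Rmult_lt_0_compat; lra. }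
    assert (0 < rho * (alpha + 1)) by (apply Rmult_lt_0_compat; lra). lra. }
  set (R1 := Rpower (K + 1) (1 / (alpha + 1))).
  assert (HRK : Q < R1).
  { assert (E : Rpower (Rpower Q (alpha+1)) (1/(alpha+1)) = Q).
    { rewrite Rpower_mult. replace ((alpha+1)*(1/(alpha+1))) with 1 by (field; lra).
      apply Rpower_1; lra. }
    rewrite <- E. unfold R1. apply Rlt_Rpower_l.
    apply Rdiv_lt_0_compat; lra. split; auto. lra. }
  set (c := exp (1 - R1)).
  assert (Hc : 0 < c) by apply exp_pos.
  assert (Hcm0 : c < m0).
  { unfold c. rewrite <- (exp_ln m0) by lra. apply exp_increasing. lra. }
  apply is_lim_spec in Hlim. destruct (Hlim (mkposreal c Hc)) as [Nl HNl]. simpl in HNl.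
  set (N := Rmax (M + 1) (Nl + 1)).
  assert (HN : M + 1 <= N /\ Nl + 1 <= N) by (split; [apply Rmax_l|apply Rmax_r]).
  destruct (IVT (fun y => c - u0 y) M N) as [z [[Hz1 Hz2] Hz]].
  { intros y. apply cont_pt. intros e He. destruct (Hcont y e He) as [d [Hd H]].
    exists d; split; auto. intros w Hw. specialize (H w Hw).
    replace (c - u0 w - (c - u0 y)) with (- (u0 w - u0 y)) by ring. rewrite Rabs_Ropp; auto. }
  { lra. }
  { unfold m0 in Hcm0. lra. }
  { specialize (HNl N ltac:(lra)). rewrite Rminus_0_r in HNl. apply Rabs_def2 in HNl. lra. }
  assert (Hzx : z <= x).
  { destruct (Lub_Rbar_correct (fun x => u0 x = exp (1 - Rpower (rho * (alpha + 1) * t + 1) (1 / (alpha + 1))))) as [Hub _].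
    assert (Hez : u0 z = exp (1 - Rpower (rho * (alpha + 1) * t + 1) (1 / (alpha + 1)))).
    { change (u0 z = c). lra. }
    specialize (Hub z Hez). unfold x0 in Hx. pose proof (Rbar_le_trans _ _ _ Hub Hx) as H. simpl in H. exact H. }
  assert (HxM : M <= x) by lra.
  set (v := u0 x).
  assert (Hv : 0 < v <= c).
  { split. apply Hu. unfold v. replace c with (u0 z) by lra. apply Hmono; lra. }
  set (A := Afun v).
  assert (HA : R1 <= A).
  { unfold A, Afun. assert (ln v <= ln c) by (apply ln_le; lra).
    unfold c in H. rewrite ln_exp in H. lra. }
  assert (HB : 1 <= Bf alpha K A).
  { unfold Bf. assert (Rpower R1 (alpha + 1) <= Rpower A (alpha + 1)).
    { apply Rle_Rpower_l. lra. split; [|auto]. unfold R1; apply Rpower_pos. }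
    assert (Rpower R1 (alpha + 1) = K + 1).
    { unfold R1. rewrite Rpower_mult. replace (1 / (alpha + 1) * (alpha + 1)) with 1 by (field; lra).
      apply Rpower_1. unfold K. assert (0 < rho * (alpha+1) * t).
      { apply Rmult_lt_0_compat. apply Rmult_lt_0_compat; lra. 
        assert (0 < Rpower Q (alpha + 1) / (rho * (alpha + 1))) by (apply Rdiv_lt_0_compat; auto; apply Rmult_lt_0_compat; lra). lra. }
      lra. }
    lra. }
  assert (HA1 : 1 <= A) by lra.
  assert (HFc : cont_at (fun w => Bf alpha K (Afun w)) v).
  { eapply deriv_cont. unfold Afun. apply (is_derive_comp (Bf alpha K) (fun w => 1 + - ln w)).
    apply D_B. fold (Afun v). fold A. lra.
    auto_derive. lra. reflexivity. }
  destruct (cont_comp (fun w => Bf alpha K (Afun w)) u0 x HFc (Hcont x) (1/2) ltac:(lra)) as [d1 [Hd1 Hd1']].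
  set (d := Rmin d1 (x - xi0)).
  assert (Hd : 0 < d) by (apply Rmin_glb_lt; lra).
  assert (Hnb : forall y, Rabs (y - x) < d ->
     xi0 < y /\ 0 < u0 y /\ 1 <= Afun (u0 y) /\ 0 < Bf alpha K (Afun (u0 y))).
  { intros y Hy. assert (Hy1 : Rabs (y - x) < d1) by (eapply Rlt_le_trans; [exact Hy| apply Rmin_l]).
    assert (Hy2 : Rabs (y - x) < x - xi0) by (eapply Rlt_le_trans; [exact Hy| apply Rmin_r]).
    apply Rabs_def2 in Hy2. split. lra. split. apply Hu. split.
    - unfold Afun. assert (ln (u0 y) <= ln 1) by (apply ln_le; apply Hu). rewrite ln_1 in H. lra.
    - specialize (Hd1' y Hy1). apply Rabs_def2 in Hd1'. fold v in Hd1'. fold A in Hd1'. lra. }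
  assert (Dw : forall y, Rabs (y - x) < d ->
     Derive (wsol u0 alpha rho t) y = g1 alpha K (u0 y) * Derive u0 y).
  { intros y Hy. destruct (Hnb y Hy) as [Hy1 [Hy2 [Hy3 Hy4]]].
    change (wsol u0 alpha rho t) with (fun y => G1 alpha K (u0 y)).
    apply chain_junk; auto. intros h Hh; apply Hmono; lra. apply D_G1; auto; lra.
    apply g1_neq; auto. }
  assert (Dp : forall y, xi0 < y -> Derive (phi0 u0) y = - / u0 y * Derive u0 y).
  { intros y Hy. change (phi0 u0) with (fun y => (fun w => - ln w) (u0 y)).
    apply chain_junk; auto. intros h Hh; apply Hmono; lra. apply D_nln, Hu.
    assert (0 < / u0 y) by (apply Rinv_0_lt_compat, Hu). lra. }
  assert (HD2 : is_derive (Derive u0) x (Derive (Derive u0) x)).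
  { apply Derive_correct. destruct (Hreg x ltac:(lra)) as [H _]. exact H. }
  assert (HBA : 0 < Bf alpha K (Afun v)) by (fold A; lra).
  assert (EW : Derive_n (wsol u0 alpha rho t) 2 x =
     g2 alpha K v * Derive u0 x * Derive u0 x + g1 alpha K v * Derive (Derive u0) x).
  { change (Derive_n (wsol u0 alpha rho t) 2 x) with (Derive (fun y => Derive (wsol u0 alpha rho t) y) x).
    rewrite (Derive_ext_loc _ (fun y => g1 alpha K (u0 y) * Derive u0 y)).
    2: { exists (mkposreal d Hd). intros y Hy. apply Dw. exact Hy. }
    apply prod_junk; auto. apply D_g1; auto. lra. fold A; lra. }
  assert (EP2 : Derive_n (phi0 u0) 2 x = / (v * v) * Derive u0 x * Derive u0 x + - / v * Derive (Derive u0) x).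
  { change (Derive_n (phi0 u0) 2 x) with (Derive (fun y => Derive (phi0 u0) y) x).
    rewrite (Derive_ext_loc _ (fun y => (fun w => - / w) (u0 y) * Derive u0 y)).
    2: { assert (Hp : 0 < x - xi0) by lra. exists (mkposreal _ Hp). intros y Hy. apply Dp.
         change (Rabs (y - x) < x - xi0) in Hy. apply Rabs_def2 in Hy. lra. }
    apply (prod_junk u0 (fun w => - / w) (Derive u0) x); auto. apply D_ninv; lra. }
  assert (EP : Derive (phi0 u0) x = - / v * Derive u0 x) by (apply Dp; lra).
  assert (EW2 : g2 alpha K v * Derive u0 x * Derive u0 x + g1 alpha K v * Derive (Derive u0) x
     = H2 alpha K A * (Derive (phi0 u0) x * Derive (phi0 u0) x) + H1 alpha K A * Derive_n (phi0 u0) 2 x).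
  { rewrite EP, EP2. unfold g1, g2. fold A. assert (v <> 0) by lra. revert H.
    generalize (H1 alpha K A) (H2 alpha K A) (Derive u0 x) (Derive (Derive u0) x). intros. field. auto. }
  replace (wsol u0 alpha rho t x) with (Hf alpha K A) by reflexivity.
  assert (ES : 1 - ln (Hf alpha K A) = Sf alpha K A).
  { unfold Hf. rewrite ln_exp. ring. }
  rewrite ES, EW, EW2. unfold H1, H2.
  assert (HS0 : 0 < Sf alpha K A) by (unfold Sf; apply Rpower_pos).
  assert (HS1 : 1 <= Sf alpha K A).
  { unfold Sf. apply Rle_trans with (Rpower 1 (1 / (alpha + 1))). rewrite Rpower_one; lra.
    apply Rle_Rpower_l.
    apply Rlt_le, Rdiv_lt_0_compat; lra. lra. }
  assert (Hphi : phi0 u0 x = A - 1) by (unfold A, Afun, phi0; fold v; ring).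
  assert (Hpw : 1 <= pw alpha A).
  { unfold pw. rewrite <- (Rpower_O A) by lra. apply Rle_Rpower; lra. }
  apply alg_bound with (m0 := m1 * Rpower 2 alpha); auto.
  - unfold Hf; apply exp_pos.
  - rewrite <- (Rpower_O (Sf alpha K A)) by lra. apply Rle_Rpower; lra.
  - rewrite <- (Rpower_1 (Sf alpha K A)) at 2 by lra. rewrite <- Rpower_plus.
    unfold Sf. rewrite Rpower_mult. replace (1 / (alpha + 1) * (alpha + 1)) with 1 by (field; lra).
    apply Rpower_1. lra.
  - specialize (HM1 x ltac:(lra)). rewrite Hphi in HM1.
    assert (HA2 : 0 < A - 1) by lra.
    rewrite Rpower_Ropp in HM1. rewrite (Rabs_right (/ Rpower (A - 1) alpha)) in HM1.
    2: { apply Rle_ge, Rlt_le, Rinv_0_lt_compat, Rpower_pos. }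
    assert (Hle : pw alpha A <= Rpower 2 alpha * Rpower (A - 1) alpha).
    { unfold pw. rewrite Rpower_mult_distr by lra. apply Rle_Rpower_l; lra. }
    assert (HR : 0 < Rpower (A - 1) alpha) by apply Rpower_pos.
    apply Rle_trans with (pw alpha A * (m1 * / Rpower (A - 1) alpha)).
    { apply Rmult_le_compat_l; auto. lra. }
    apply Rle_trans with (Rpower 2 alpha * Rpower (A - 1) alpha * (m1 * / Rpower (A - 1) alpha)).
    { apply Rmult_le_compat_r; auto. apply Rmult_le_pos. lra. apply Rlt_le, Rinv_0_lt_compat; auto. }
    right. field. lra.
  - specialize (HM2 x ltac:(lra)). lra.
  - unfold m1. assert (Rmin 1 eps <= 1) by apply Rmin_l.
    replace (Rmin 1 eps / (Rpower 2 alpha * (4 + 4 * alpha)) * Rpower 2 alpha) with (Rmin 1 eps / (4 + 4 * alpha)) by (field; lra).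
    apply Rle_trans with (Rmin 1 eps / 1). apply Rmult_le_compat_l. lra.
    apply Rinv_le_contravar; lra. lra.
  - unfold m1. assert (Rmin 1 eps <= eps) by apply Rmin_r.
    replace ((2 + 2 * alpha) * (Rmin 1 eps / (Rpower 2 alpha * (4 + 4 * alpha)) * Rpower 2 alpha)) with (Rmin 1 eps / 2) by (field; lra).
    lra.
Qed.
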